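(* Let $\alpha:U\to V$ be a surjective h-transmission between commutative supertropical monoids, with $M:=eU$, $N:=eV$, $\gamma:=\alpha^\nu$, and let $\alpha=\rho\circ\mu\circ\beta\circ\lambda$ be its canonical factorization, where $\lambda=\pi_{E(U,\mathfrak A)}:U\to\bar U:=U/E(U,\mathfrak A)$ with $\mathfrak A=\mathfrak A_\alpha$, $\beta=\pi_{F(\bar U,\gamma)}:\bar U\to W:=\bar U/F(\bar U,\gamma)$, $\mu=\pi_T:W\to\bar W:=W/T$ with $T$ a tangible MFCE-relation on $W$, and $\rho:\bar W\to V$ an isomorphism over $N$. (i) The factors $\lambda,\beta,\mu,\rho$ are h-transmissions. (ii) If $U$ is a semiring, then $\bar U,W,\bar W,V$ are semirings, and $\lambda,\beta,\mu,\rho$ are semiring homomorphisms.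
   Context: All monoids are commutative. A supertropical monoid is a monoid $(U,\cdot)$ with absorbing element $0$ and distinguished idempotent $e$ with $ex=0\Rightarrow x=0$, together with a total ordering on $M:=eU$, compatible with multiplication and with $0$ least, making $M$ a bipotent semiring (addition $=\max$). $\mathcal T(U):=U\setminus eU$. Define $x+y:=y$ if $ex<ey$, $x$ if $ex>ey$, $ex$ if $ex=ey$; $U$ is a semiring if this addition is associative and distributive. A transmission $\alpha:U\to V$ is a map with $\alpha(0)=0$, $\alpha(1)=1$, multiplicative, $\alpha(e_U)=e_V$, order-preserving on $eU$; $\alpha^\nu$ is its restriction $eU\to eV$; ghost kernel $\mathfrak A_\alpha:=\{x:\alpha(x)\in eV\}$. An h-transmission is a transmission such that $ex<ey$ and $\alpha(ex)=\alpha(ey)$ imply $\alpha(y)\in eV$. For a TE-relation $E$ (multiplicative, order compatible on $M$, $ex\sim_E0\Rightarrow x\sim_E0$), $U/E$ has the unique supertropical monoid structure making $\pi_E$ a transmission. $E(U,\mathfrak A)$ for an ideal $\mathfrak A\supseteq M$: $x\sim y$ iff $x=y$ or ($x,y\in\mathfrak A$, $ex=ey$); ghost ideal of the quotient identified with $M$. $F(U,\gamma)$ for surjective $\gamma:M\to N$: $x\sim y$ iff $x=y$, or $x,y\in M$ with $\gamma(x)=\gamma(y)$, or $\gamma(ex)=\gamma(ey)=0$; ghost ideal of the quotient identified with $N$. An MFCE-relation is a multiplicative equivalence relation with $x\sim y\Rightarrow ex=ey$; it is tangible if each ghost element is equivalent only to itself. An isomorphism over $N$ is one whose ghost part is $\mathrm{id}_N$.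 (By the paper, every surjective transmission has a unique such canonical factorization.) *)

(* Defs.v *)
From Stdlib Require Import Bool.

Set Implicit Arguments.
Unset Strict Implicit.

(* A commutative supertropical monoid.  [le] is the total ordering of the
   ghost ideal M = eU (only its values on ghost elements matter). *)
Record stmonoid := STMonoid {
  carrier :> Type;
  smul : carrier -> carrier -> carrier;
  sone : carrier;
  szero : carrier;
  se : carrier;
  sle : carrier -> carrier -> bool;
  smulA : forall x y z, smul x (smul y z) = smul (smul x y) z;
  smulC : forall x y, smul x y = smul y x;
  smul1 : forall x, smul sone x = x;
  smul0 : forall x, smul szero x = szero;
  se_idem : smul se se = se;
  se_faithful : forall x, smul se x = szero -> x = szero;
  sle_refl : forall x, smul se x = x -> sle x x = true;
  sle_antisym : forall x y, smul se x = x -> smul se y = y ->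
      sle x y = true -> sle y x = true -> x = y;
  sle_trans : forall x y z, smul se x = x -> smul se y = y -> smul se z = z ->
      sle x y = true -> sle y z = true -> sle x z = true;
  sle_total : forall x y, smul se x = x -> smul se y = y ->
      sle x y = true \/ sle y x = true;
  sle_mul : forall x y z, smul se x = x -> smul se y = y -> smul se z = z ->
      sle x y = true -> sle (smul x z) (smul y z) = true;
  sle_zero : forall x, smul se x = x -> sle szero x = true
}.

Arguments smul {s}.
Arguments sone {s}.
Arguments szero {s}.
Arguments se {s}.
Arguments sle {s}.

Definition ghost (U : stmonoid) (x : U) : Prop := smul se x = x.

Definition slt (U : stmonoid) (x y : U) : bool := sle x y && negb (sle y x).

Definition sadd (U : stmonoid) (x y : U) : U :=
  if slt (smul se x) (smul se y) then y
  else if slt (smul se y) (smul se x) then x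
  else smul se x.

Definition is_semiring (U : stmonoid) : Prop :=
  (forall x y z : U, sadd x (sadd y z) = sadd (sadd x y) z) /\
  (forall x y z : U, smul (sadd x y) z = sadd (smul x z) (smul y z)).

Definition semiring_hom (U V : stmonoid) (f : U -> V) : Prop :=
  f szero = szero /\ f sone = sone /\
  (forall x y, f (smul x y) = smul (f x) (f y)) /\
  (forall x y, f (sadd x y) = sadd (f x) (f y)).

Definition surjective (A B : Type) (f : A -> B) : Prop :=
  forall b, exists a, f a = b.

Definition transmission (U V : stmonoid) (a : U -> V) : Prop :=
  a szero = szero /\ a sone = sone /\
  (forall x y, a (smul x y) = smul (a x) (a y)) /\
  a se = se /\
  (forall x y, ghost x -> ghost y -> sle x y = true -> sle (a x) (a y) = true).

Definition ghost_kernel (U V : stmonoid) (a : U -> V) (x : U) : Prop :=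
  ghost (a x).

Definition h_transmission (U V : stmonoid) (a : U -> V) : Prop :=
  transmission a /\
  (forall x y : U, slt (smul se x) (smul se y) = true ->
      a (smul se x) = a (smul se y) -> ghost (a y)).

Definition st_iso (U V : stmonoid) (r : U -> V) : Prop :=
  transmission r /\
  exists s : V -> U, transmission s /\
    (forall x, s (r x) = x) /\ (forall y, r (s y) = y).

(* q : U -> Q "is the quotient map pi_R : U -> U/R": a surjective transmission
   whose fibres are exactly the R-classes.  (U/R is the unique supertropical
   monoid structure making pi_R a transmission, so this determines (Q,q) up to
   unique isomorphism.) *)
Definition quotient_map (U Q : stmonoid) (R : U -> U -> Prop) (q : U -> Q) : Prop :=
  transmission q /\ surjective q /\ (forall x y, q x = q y <-> R x y).

Definition E_rel (U : stmonoid) (A : U -> Prop) (x y : U) : Prop :=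
  x = y \/ (A x /\ A y /\ smul se x = smul se y).

(* the relation F(U, g), g : M -> N given on the ghost elements of U *)
Definition F_rel (U V : stmonoid) (g : U -> V) (x y : U) : Prop :=
  x = y \/
  (ghost x /\ ghost y /\ g x = g y) \/
  (g (smul se x) = szero /\ g (smul se y) = szero).

Definition MFCE (U : stmonoid) (T : U -> U -> Prop) : Prop :=
  (forall x, T x x) /\ (forall x y, T x y -> T y x) /\
  (forall x y z, T x y -> T y z -> T x z) /\
  (forall x y z, T x y -> T (smul x z) (smul y z)) /\
  (forall x y, T x y -> smul se x = smul se y).

Definition tangible_MFCE (U : stmonoid) (T : U -> U -> Prop) : Prop :=
  MFCE T /\ (forall x y, ghost x -> T x y -> y = x).

(* Main.v *)
Require Import Defs.
From Stdlib Require Import Bool.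

Lemma ee (U : stmonoid) (x : U) : smul se (smul se x) = smul se x.
Proof. rewrite smulA, se_idem; reflexivity. Qed.

Lemma slt_irr (U : stmonoid) (x : U) : slt x x = false.
Proof. unfold slt; destruct (sle x x); reflexivity. Qed.

Lemma tr_e (U V : stmonoid) (a : U -> V) x :
  transmission a -> a (smul se x) = smul se (a x).
Proof. intros (H0 & H1 & HM & He & HL). rewrite HM, He; reflexivity. Qed.
Arguments tr_e {U V a} x _.

Lemma slt_le (U : stmonoid) (x y : U) : slt x y = true -> sle x y = true.
Proof. unfold slt; destruct (sle x y); simpl; congruence. Qed.

Lemma le_cases (U : stmonoid) (x y : U) : ghost x -> ghost y ->
  slt x y = false -> slt y x = false -> x = y.
Proof.
  unfold slt; intros gx gy H1 H2.
  destruct (sle x y) eqn:E1, (sle y x) eqn:E2; simpl in *; try discriminate.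
  - apply sle_antisym; auto.
  - destruct (sle_total gx gy); congruence.
Qed.

Arguments le_cases {U x y}.

Lemma h_add (U V : stmonoid) (a : U -> V) : h_transmission a ->
  forall x y, a (sadd x y) = sadd (a x) (a y).
Proof.
  intros [Ht Hh] x y. pose proof Ht as (H0 & H1 & HM & He & HL).
  assert (gex : ghost (smul se x)) by apply ee.
  assert (gey : ghost (smul se y)) by apply ee.
  assert (geax : ghost (smul se (a x))) by apply ee.
  assert (geay : ghost (smul se (a y))) by apply ee.
  unfold sadd.
  destruct (slt (smul se x) (smul se y)) eqn:E1.
  - assert (L : sle (smul se (a x)) (smul se (a y)) = true).
    { rewrite <- !(tr_e _ Ht). apply HL; auto. apply slt_le; auto. }
    destruct (slt (smul se (a x)) (smul se (a y))) eqn:F1; [reflexivity|].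
    assert (F2 : slt (smul se (a y)) (smul se (a x)) = false).
    { unfold slt. rewrite L. simpl. apply andb_false_r. }
    rewrite F2.
    pose proof (le_cases geax geay F1 F2) as Eq.
    assert (G : ghost (a y)). { apply (Hh x y E1). rewrite !(tr_e _ Ht); auto. }
    rewrite Eq. symmetry; exact G.
  - destruct (slt (smul se y) (smul se x)) eqn:E2.
    + assert (L : sle (smul se (a y)) (smul se (a x)) = true).
      { rewrite <- !(tr_e _ Ht). apply HL; auto. apply slt_le; auto. }
      assert (F1 : slt (smul se (a x)) (smul se (a y)) = false).
      { unfold slt. rewrite L. simpl. apply andb_false_r. }
      rewrite F1.
      destruct (slt (smul se (a y)) (smul se (a x))) eqn:F2; [reflexivity|].
      pose proof (le_cases geax geay F1 F2) as Eq.
      assert (G : ghost (a x)). { apply (Hh y x E2). rewrite !(tr_e _ Ht); auto. }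
      exact (eq_sym G).
    + pose proof (le_cases gex gey E1 E2) as Eq.
      rewrite <- !(tr_e _ Ht). rewrite <- Eq. rewrite slt_irr. reflexivity.
Qed.

Arguments h_add {U V a}.

Lemma h_semiring (U V : stmonoid) (a : U -> V) : h_transmission a ->
  surjective a -> is_semiring U -> is_semiring V.
Proof.
  intros Hh Hs [HA HD]. pose proof Hh as [(H0 & H1 & HM & He & HL) _].
  split; intros x y z;
  destruct (Hs x) as [x' <-]; destruct (Hs y) as [y' <-]; destruct (Hs z) as [z' <-].
  - rewrite <- !(h_add Hh), HA; reflexivity.
  - rewrite <- (h_add Hh x' y'), <- !HM, <- (h_add Hh), HD; reflexivity.
Qed.

Arguments h_semiring {U V a}.

Lemma h_hom (U V : stmonoid) (a : U -> V) : h_transmission a -> semiring_hom a.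
Proof.
  intros Hh. pose proof Hh as [(H0 & H1 & HM & He & HL) _].
  repeat split; auto. apply h_add; auto.
Qed.

Arguments h_hom {U V a}.

Theorem theorem5p11
  (U V Ubar W Wbar : stmonoid) (alpha : U -> V)
  (lam : U -> Ubar) (beta : Ubar -> W) (mu : W -> Wbar) (rho : Wbar -> V)
  (gbar : Ubar -> V) (T : W -> W -> Prop) :
  (* alpha is a surjective h-transmission *)
  h_transmission alpha -> surjective alpha ->
  (* lambda = pi_{E(U, A_alpha)} *)
  quotient_map (E_rel (ghost_kernel alpha)) lam ->
  (* gbar is gamma = alpha^nu transported to the ghost ideal of Ubar (= M) *)
  (forall m : U, ghost m -> gbar (lam m) = alpha m) ->
  (* beta = pi_{F(Ubar, gamma)} *)
  quotient_map (F_rel gbar) beta ->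
  (* mu = pi_T, with T a tangible MFCE-relation on W *)
  tangible_MFCE T -> quotient_map T mu ->
  (* rho an isomorphism over N *)
  st_iso rho ->
  (forall x : U, alpha x = rho (mu (beta (lam x)))) ->
  (* (i) *)
  (h_transmission lam /\ h_transmission beta /\ h_transmission mu /\
   h_transmission rho) /\
  (* (ii) *)
  (is_semiring U ->
     (is_semiring Ubar /\ is_semiring W /\ is_semiring Wbar /\ is_semiring V) /\
     (semiring_hom lam /\ semiring_hom beta /\ semiring_hom mu /\
      semiring_hom rho)).
Proof.
  intros Ha Hsa [Ltr [Ls Lq]] Hg [Btr [Bs Bq]] [_ Ttang] [Mtr [Ms Mq]]
    [Rtr [s [Str [Rsr Rrs]]]] _.
  assert (Rs : surjective rho) by (intros b; exists (s b); auto).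
  assert (hL : h_transmission lam).
  { split; auto. intros x y Hlt Heq. exfalso.
    apply Lq in Heq. destruct Heq as [Heq | (_ & _ & Heq)].
    - rewrite Heq, slt_irr in Hlt; discriminate.
    - rewrite !ee in Heq. rewrite Heq, slt_irr in Hlt; discriminate. }
  assert (hM : h_transmission mu).
  { split; auto. intros x y Hlt Heq. exfalso.
    apply Mq in Heq. apply Ttang in Heq; [|apply ee].
    rewrite Heq, slt_irr in Hlt; discriminate. }
  assert (hR : h_transmission rho).
  { split; auto. intros x y Hlt Heq. exfalso.
    assert (E : smul se x = smul se y) by (rewrite <- (Rsr (smul se x)), Heq; auto).
    rewrite E, slt_irr in Hlt; discriminate. }
  assert (hB : h_transmission beta).
  { split; auto. intros x y Hlt Heq.
    destruct (Ls x) as [u <-]; destruct (Ls y) as [v <-].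
    rewrite <- !(tr_e _ Ltr) in Hlt, Heq.
    assert (gu : ghost (smul se u)) by apply ee.
    assert (gv : ghost (smul se v)) by apply ee.
    assert (Aeq : alpha (smul se u) = alpha (smul se v)).
    { apply Bq in Heq. destruct Heq as [Heq | [(_ & _ & Heq) | (Z1 & Z2)]].
      - rewrite Heq, slt_irr in Hlt; discriminate.
      - rewrite !Hg in Heq; auto.
      - rewrite <- (tr_e _ Ltr), ee, Hg in Z1 by auto.
        rewrite <- (tr_e _ Ltr), ee, Hg in Z2 by auto. congruence. }
    assert (Sl : slt (smul se u) (smul se v) = true).
    { unfold slt. destruct (sle (smul se u) (smul se v)) eqn:E1,
        (sle (smul se v) (smul se u)) eqn:E2; simpl; auto.
      - exfalso. rewrite (sle_antisym gu gv E1 E2), slt_irr in Hlt; discriminate.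
      - exfalso. destruct Ltr as (_ & _ & _ & _ & LL).
        specialize (LL _ _ gv gu E2). unfold slt in Hlt. rewrite LL in Hlt.
        simpl in Hlt. rewrite andb_false_r in Hlt. discriminate.
      - exfalso. destruct (sle_total gu gv); congruence. }
    destruct Ha as [Atr Ah].
    pose proof (Ah u v Sl Aeq) as Gv.
    assert (Lv : lam v = lam (smul se v)).
    { apply Lq. right. unfold ghost_kernel. split; [exact Gv|]. split.
      - rewrite (tr_e _ Atr). apply ee.
      - symmetry; apply ee. }
    unfold ghost. rewrite Lv, (tr_e _ Ltr), (tr_e _ Btr). apply ee. }
  split; [auto|].
  intros HU.
  assert (SUb : is_semiring Ubar) by (apply (h_semiring hL); auto).
  assert (SW : is_semiring W) by (apply (h_semiring hB); auto).
  assert (SWb : is_semiring Wbar) by (apply (h_semiring hM); auto).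
  assert (SV : is_semiring V) by (apply (h_semiring hR); auto).
  split; [tauto|]. repeat split; apply h_hom; auto.
Qed.
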